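(* There is no functor $\sigma\colon\mathrm{ED}\to\mathrm{EEED}$ (additive or otherwise) such that the composite $\pi\sigma\colon\mathrm{ED}\to\mathrm{ED}$ is naturally isomorphic to the identity functor.
   Context: For an abelian group $U$, $U[2]=\{u:2u=0\}$ and $U/2=U/2U$. An extended $\eta$-diagram is a diagram of abelian groups $B\xrightarrow{\psi}A\xrightarrow{\eta}C\xrightarrow{\chi}B$ with $2\eta=0$, $\psi\chi=0$ and $\chi\eta\psi=2\cdot1_B$. A morphism to $B'\xrightarrow{\psi'}A'\xrightarrow{\eta'}C'\xrightarrow{\chi'}B'$ is a triple $(f,g,h)$, $f\colon A\to A'$, $g\colon B\to B'$, $h\colon C\to C'$, with $f\psi=\psi'g$, $h\eta=\eta'f$, $g\chi=\chi'h$. The diagram is exact if the induced sequence $C/2\xrightarrow{\chi}B\xrightarrow{\psi}A[2]$ is short exact; $\mathrm{EEED}$ is the category of exact extended $\eta$-diagrams. $\mathrm{ED}$ is the category of homomorphisms $\eta\colon A\to C$ of abelian groups with $2\eta=0$, morphisms being commutative squares $(f,h)$. $\pi\colon\mathrm{EEED}\to\mathrm{ED}$ forgets $B,\chi,\psi$ and sends $(f,g,h)$ to $(f,h)$. *)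

(* Defs.v *)
(* Morphisms of the categories
   are compared extensionally (pointwise equality of the component maps). *)
From HB Require Import structures.
From mathcomp Require Import all_boot all_algebra.
Set Implicit Arguments. Unset Strict Implicit. Unset Printing Implicit Defensive.
Import GRing.Theory.
Local Open Scope ring_scope.

Record ED_obj := ED_Obj {
  ED_A : zmodType;
  ED_C : zmodType;
  ED_eta : ED_A -> ED_C;
  ED_eta_hom : GRing.zmod_morphism ED_eta;
  ED_eta2 : forall a, ED_eta a *+ 2 = 0 }.

Record ED_hom (X Y : ED_obj) := ED_Hom {
  EDh_f : ED_A X -> ED_A Y;
  EDh_h : ED_C X -> ED_C Y;
  EDh_f_hom : GRing.zmod_morphism EDh_f;
  EDh_h_hom : GRing.zmod_morphism EDh_h;
  EDh_comm : forall a, EDh_h (@ED_eta X a) = @ED_eta Y (EDh_f a) }.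

Definition ED_hom_eq (X Y : ED_obj) (m n : ED_hom X Y) : Prop :=
  (forall a, EDh_f m a = EDh_f n a) /\ (forall c, EDh_h m c = EDh_h n c).

Definition ED_id (X : ED_obj) : ED_hom X X.
Proof.
refine (@ED_Hom X X id id _ _ _) => //.
Defined.

Definition ED_comp (X Y Z : ED_obj) (n : ED_hom Y Z) (m : ED_hom X Y) :
  ED_hom X Z.
Proof.
refine (@ED_Hom X Z (EDh_f n \o EDh_f m) (EDh_h n \o EDh_h m) _ _ _).
- by move=> x y /=; rewrite (EDh_f_hom m) (EDh_f_hom n).
- by move=> x y /=; rewrite (EDh_h_hom m) (EDh_h_hom n).
- by move=> a /=; rewrite EDh_comm EDh_comm.
Defined.

(* Exactness of C/2 -chi-> B -psi-> A[2] is written out: chi induces   *)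
(* an injection C/2C -> B (ker chi is contained in 2C), ker psi = im   *)
(* chi, and psi maps onto A[2].  (That chi kills 2C and psi lands in   *)
(* A[2] follows from the diagram axioms.)                              *)
Record EEED_obj := EEED_Obj {
  EE_A : zmodType;
  EE_B : zmodType;
  EE_C : zmodType;
  EE_psi : EE_B -> EE_A;
  EE_eta : EE_A -> EE_C;
  EE_chi : EE_C -> EE_B;
  EE_psi_hom : GRing.zmod_morphism EE_psi;
  EE_eta_hom : GRing.zmod_morphism EE_eta;
  EE_chi_hom : GRing.zmod_morphism EE_chi;
  EE_eta2 : forall a, EE_eta a *+ 2 = 0;
  EE_psichi : forall c, EE_psi (EE_chi c) = 0;
  EE_chietapsi : forall b, EE_chi (EE_eta (EE_psi b)) = b *+ 2;
  EE_exact_C2 : forall c, EE_chi c = 0 -> exists c', c = c' *+ 2;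
  EE_exact_B : forall b, EE_psi b = 0 -> exists c, EE_chi c = b;
  EE_exact_A2 : forall a, a *+ 2 = 0 -> exists b, EE_psi b = a }.

Record EEED_hom (X Y : EEED_obj) := EEED_Hom {
  EEh_f : EE_A X -> EE_A Y;
  EEh_g : EE_B X -> EE_B Y;
  EEh_h : EE_C X -> EE_C Y;
  EEh_f_hom : GRing.zmod_morphism EEh_f;
  EEh_g_hom : GRing.zmod_morphism EEh_g;
  EEh_h_hom : GRing.zmod_morphism EEh_h;
  EEh_psi : forall b, EEh_f (@EE_psi X b) = @EE_psi Y (EEh_g b);
  EEh_eta : forall a, EEh_h (@EE_eta X a) = @EE_eta Y (EEh_f a);
  EEh_chi : forall c, EEh_g (@EE_chi X c) = @EE_chi Y (EEh_h c) }.

Definition EEED_hom_eq (X Y : EEED_obj) (m n : EEED_hom X Y) : Prop :=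
  [/\ forall a, EEh_f m a = EEh_f n a,
      forall b, EEh_g m b = EEh_g n b &
      forall c, EEh_h m c = EEh_h n c].

Definition EEED_id (X : EEED_obj) : EEED_hom X X.
Proof.
by refine (@EEED_Hom X X id id id _ _ _ _ _ _).
Defined.

Definition EEED_comp (X Y Z : EEED_obj) (n : EEED_hom Y Z)
  (m : EEED_hom X Y) : EEED_hom X Z.
Proof.
refine (@EEED_Hom X Z (EEh_f n \o EEh_f m) (EEh_g n \o EEh_g m)
          (EEh_h n \o EEh_h m) _ _ _ _ _ _).
- by move=> x y /=; rewrite (EEh_f_hom m) (EEh_f_hom n).
- by move=> x y /=; rewrite (EEh_g_hom m) (EEh_g_hom n).
- by move=> x y /=; rewrite (EEh_h_hom m) (EEh_h_hom n).
- by move=> b /=; rewrite EEh_psi EEh_psi.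
- by move=> a /=; rewrite EEh_eta EEh_eta.
- by move=> c /=; rewrite EEh_chi EEh_chi.
Defined.

Definition pi_obj (X : EEED_obj) : ED_obj :=
  @ED_Obj (EE_A X) (EE_C X) (@EE_eta X) (@EE_eta_hom X) (@EE_eta2 X).

Definition pi_hom (X Y : EEED_obj) (m : EEED_hom X Y) :
  ED_hom (pi_obj X) (pi_obj Y) :=
  @ED_Hom (pi_obj X) (pi_obj Y) (EEh_f m) (EEh_h m)
    (EEh_f_hom m) (EEh_h_hom m) (EEh_eta m).

Record functor_ED_EEED := Functor_ED_EEED {
  F_obj : ED_obj -> EEED_obj;
  F_hom : forall X Y : ED_obj, ED_hom X Y -> EEED_hom (F_obj X) (F_obj Y);
  F_hom_ext : forall (X Y : ED_obj) (m n : ED_hom X Y),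
      ED_hom_eq m n -> EEED_hom_eq (F_hom m) (F_hom n);
  F_id : forall X : ED_obj, EEED_hom_eq (F_hom (ED_id X)) (EEED_id (F_obj X));
  F_comp : forall (X Y Z : ED_obj) (m : ED_hom X Y) (n : ED_hom Y Z),
      EEED_hom_eq (F_hom (ED_comp n m)) (EEED_comp (F_hom n) (F_hom m)) }.

Definition nat_iso_pi_sigma_id (s : functor_ED_EEED) : Type :=
  { alpha : forall X : ED_obj, ED_hom (pi_obj (F_obj s X)) X &
  { beta  : forall X : ED_obj, ED_hom X (pi_obj (F_obj s X)) &
    [/\ forall X, ED_hom_eq (ED_comp (alpha X) (beta X)) (ED_id X),
        forall X, ED_hom_eq (ED_comp (beta X) (alpha X))
                            (ED_id (pi_obj (F_obj s X))) &
        forall (X Y : ED_obj) (m : ED_hom X Y),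
          ED_hom_eq (ED_comp (alpha Y) (pi_hom (F_hom s m)))
                    (ED_comp m (alpha X))] } }.

(* Main.v *)
Require Import Defs.
From mathcomp Require Import all_boot all_algebra.
Import GRing.Theory.
Local Open Scope ring_scope.

Lemma Z2_cases (P : 'Z_2 -> Prop) : P 0 -> P 1 -> forall x, P x.
Proof.
move=> H0 H1; case=> -[|[|i]] Hi.
- by have -> : Ordinal Hi = 0 :> 'Z_2 by apply/val_inj.
- by have -> : Ordinal Hi = 1 :> 'Z_2 by apply/val_inj.
- by [].
Qed.

Lemma V_cases (P : ('Z_2 * 'Z_2)%type -> Prop) :
  (forall a b : 'Z_2, P (a, b)) -> forall x, P x.
Proof. by move=> H [a b]. Qed.

Ltac z2 := hnf; lazymatch goal with
  | |- forall x : ?T, _ => let T' := eval hnf in T in lazymatch T' with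
      | prod _ _ => apply: V_cases; z2
      | _ => apply: Z2_cases; z2 end
  | |- _ => apply/eqP; by [] end.

Section ZM.
Variables (U W : zmodType) (f : U -> W) (H : GRing.zmod_morphism f).
Lemma zm0 : f 0 = 0.
Proof. by have := H 0 0; rewrite !subrr. Qed.
Lemma zmN x : f (- x) = - f x.
Proof. by have := H 0 x; rewrite !sub0r zm0 sub0r. Qed.
Lemma zmD x y : f (x + y) = f x + f y.
Proof. by have := H x (- y); rewrite opprK zmN opprK. Qed.
Lemma zm2 x : f (x *+ 2) = f x *+ 2.
Proof. by rewrite !mulr2n zmD. Qed.
End ZM.
Arguments zm0 {U W f} H.
Arguments zmN {U W f} H x.
Arguments zmD {U W f} H x y.
Arguments zm2 {U W f} H x.

Definition V := ('Z_2 * 'Z_2)%type.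

Lemma Z2_2 : forall x : 'Z_2, x *+ 2 = 0.
Proof. z2. Qed.
Lemma V_2 : forall x : V, x *+ 2 = 0.
Proof. z2. Qed.

Lemma id_hom (U : zmodType) : GRing.zmod_morphism (@id U).
Proof. by []. Qed.

Definition X1 : ED_obj := @ED_Obj 'Z_2 'Z_2 id (@id_hom _) Z2_2.
Definition X2 : ED_obj := @ED_Obj V V id (@id_hom _) V_2.

Definition fi1 (x : 'Z_2) : V := (x, 0).
Definition fi2 (x : 'Z_2) : V := (0, x).
Definition fi3 (x : 'Z_2) : V := (x, x).
Definition fp1 (v : V) : 'Z_2 := v.1.
Definition fp2 (v : V) : 'Z_2 := v.2.
Definition fp3 (v : V) : 'Z_2 := v.1 + v.2.

Lemma fi1_h : GRing.zmod_morphism fi1. Proof. red; z2. Qed.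
Lemma fi2_h : GRing.zmod_morphism fi2. Proof. red; z2. Qed.
Lemma fi3_h : GRing.zmod_morphism fi3. Proof. red; z2. Qed.
Lemma fp1_h : GRing.zmod_morphism fp1. Proof. red; z2. Qed.
Lemma fp2_h : GRing.zmod_morphism fp2. Proof. red; z2. Qed.
Lemma fp3_h : GRing.zmod_morphism fp3. Proof. red; z2. Qed.

Definition i1 : ED_hom X1 X2 := @ED_Hom X1 X2 fi1 fi1 fi1_h fi1_h (fun _ => erefl).
Definition i2 : ED_hom X1 X2 := @ED_Hom X1 X2 fi2 fi2 fi2_h fi2_h (fun _ => erefl).
Definition i3 : ED_hom X1 X2 := @ED_Hom X1 X2 fi3 fi3 fi3_h fi3_h (fun _ => erefl).
Definition p1 : ED_hom X2 X1 := @ED_Hom X2 X1 fp1 fp1 fp1_h fp1_h (fun _ => erefl).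
Definition p2 : ED_hom X2 X1 := @ED_Hom X2 X1 fp2 fp2 fp2_h fp2_h (fun _ => erefl).
Definition p3 : ED_hom X2 X1 := @ED_Hom X2 X1 fp3 fp3 fp3_h fp3_h (fun _ => erefl).

Ltac edeq := split; z2.

Theorem proposition3p8 :
  forall s : functor_ED_EEED, nat_iso_pi_sigma_id s -> False.
Proof.
move=> s [al [be [Hab Hba Hnat]]].
have nf : forall X Y (m : ED_hom X Y) a,
    EDh_f (al Y) (EEh_f (F_hom s m) a) = EDh_f m (EDh_f (al X) a).
  by move=> X Y m a; exact: (proj1 (Hnat X Y m) a).
have nh : forall X Y (m : ED_hom X Y) c,
    EDh_h (al Y) (EEh_h (F_hom s m) c) = EDh_h m (EDh_h (al X) c).
  by move=> X Y m c; exact: (proj2 (Hnat X Y m) c).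
have abf : forall X a, EDh_f (al X) (EDh_f (be X) a) = a.
  by move=> X a; exact: (proj1 (Hab X) a).
have baf : forall X a, EDh_f (be X) (EDh_f (al X) a) = a.
  by move=> X a; exact: (proj1 (Hba X) a).
have bah : forall X c, EDh_h (be X) (EDh_h (al X) c) = c.
  by move=> X c; exact: (proj2 (Hba X) c).
have Gc : forall X Y Z (m : ED_hom X Y) (n : ED_hom Y Z) b,
    EEh_g (F_hom s (ED_comp n m)) b = EEh_g (F_hom s n) (EEh_g (F_hom s m) b).
  by move=> X Y Z m n b; case: (F_comp s m n) => _ H _; exact: H.
have Gext : forall X Y (m n : ED_hom X Y), ED_hom_eq m n ->
    forall b, EEh_g (F_hom s m) b = EEh_g (F_hom s n) b.
  by move=> X Y m n E b; case: (F_hom_ext s E) => _ H _; exact: H.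
have Gid : forall X b, EEh_g (F_hom s (ED_id X)) b = b.
  by move=> X b; case: (F_id s X) => _ H _; exact: H.
have alf_inj : forall X a a', EDh_f (al X) a = EDh_f (al X) a' -> a = a'.
  by move=> X a a' E; rewrite -(baf X a) E baf.
have alh_inj : forall X c c', EDh_h (al X) c = EDh_h (al X) c' -> c = c'.
  by move=> X c c' E; rewrite -(bah X c) E bah.
have Gzero : forall X (m : ED_hom X X), (forall a, EDh_f m a = 0) ->
    (forall c, EDh_h m c = 0) -> forall b, EEh_g (F_hom s m) b = 0.
  move=> X m Hf Hh b.
  have mm : ED_hom_eq (ED_comp m m) m by split=> x /=; rewrite !(Hf, Hh).
  have Ff : forall a, EEh_f (F_hom s m) a = 0.
    move=> a; apply: alf_inj; rewrite nf Hf.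
    by rewrite (zm0 (EDh_f_hom (al X))).
  have Fh : forall c, EEh_h (F_hom s m) c = 0.
    move=> c; apply: alh_inj; rewrite nh Hh.
    by rewrite (zm0 (EDh_h_hom (al X))).
  have : EE_psi (EEh_g (F_hom s m) b) = 0 by rewrite -EEh_psi Ff.
  move/EE_exact_B=> [c Hc].
  rewrite -(Gext _ _ _ _ mm b) Gc -Hc EEh_chi Fh.
  exact: (zm0 (@EE_chi_hom _)).
pose Z1 := F_obj s X1. pose Z2 := F_obj s X2.
pose a0 : EE_A Z1 := EDh_f (be X1) 1.
have : a0 *+ 2 = 0.
  by rewrite /a0 -(zm2 (EDh_f_hom (be X1))) Z2_2 (zm0 (EDh_f_hom (be X1))).
move/EE_exact_A2=> [b0 Hb0].
pose g X Y (m : ED_hom X Y) := EEh_g (F_hom s m).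
pose x1 := g _ _ i1 b0. pose x2 := g _ _ i2 b0. pose x3 := g _ _ i3 b0.
have Psi : forall i : ED_hom X1 X2,
    EDh_f (al X2) (EE_psi (g _ _ i b0)) = EDh_f i 1.
  by move=> i; rewrite /g -EEh_psi nf Hb0 abf.
have kerh : forall (q : ED_hom X2 X1) c,
    @EE_chi Z1 (EEh_h (F_hom s q) c) = 0 -> EDh_h q (EDh_h (al X2) c) = 0.
  move=> q c /EE_exact_C2 [c' Hc'].
  by rewrite -nh Hc' (zm2 (EDh_h_hom (al X1))) Z2_2.
have kern : forall y : EE_B Z2, EE_psi y = 0 ->
    forall q q' : ED_hom X2 X1,
    (forall v : V, EDh_h q v = 0 -> EDh_h q' v = 0 -> v = 0) ->
    g _ _ q y = 0 -> g _ _ q' y = 0 -> y = 0.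
  move=> y /EE_exact_B [c Hc] q q' Hqq Hq Hq'.
  rewrite -Hc /g EEh_chi in Hq; rewrite -Hc /g EEh_chi in Hq'.
  have E := Hqq _ (kerh _ _ Hq) (kerh _ _ Hq').
  rewrite -Hc; have -> : c = 0.
    apply: alh_inj; rewrite E.
    by rewrite (zm0 (EDh_h_hom (al X2))).
  exact: (zm0 (@EE_chi_hom _)).
have gB : forall q : ED_hom X2 X1, forall u v w : EE_B Z2,
    g _ _ q (u - v - w) = g _ _ q u - g _ _ q v - g _ _ q w.
  by move=> q u v w; rewrite /g !(EEh_g_hom (F_hom s q)).
have pB : forall u v w : EE_B Z2,
    EE_psi (u - v - w) = EE_psi u - EE_psi v - EE_psi w.
  by move=> u v w; rewrite !(@EE_psi_hom Z2).
have aB : forall u v w : EE_A Z2,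
    EDh_f (al X2) (u - v - w) =
    EDh_f (al X2) u - EDh_f (al X2) v - EDh_f (al X2) w.
  by move=> u v w; rewrite !(EDh_f_hom (al X2)).
have gid : forall (q : ED_hom X2 X1) (i : ED_hom X1 X2),
    ED_hom_eq (ED_comp q i) (ED_id X1) -> g _ _ q (g _ _ i b0) = b0.
  by move=> q i E; rewrite /g -Gc (Gext _ _ _ _ E) Gid.
have gz : forall (q : ED_hom X2 X1) (i : ED_hom X1 X2),
    (forall a, EDh_f (ED_comp q i) a = 0) ->
    (forall c, EDh_h (ED_comp q i) c = 0) -> g _ _ q (g _ _ i b0) = 0.
  by move=> q i Ef Eh; rewrite /g -Gc (Gzero _ _ Ef Eh).
have H1 : x3 - x1 - x2 = 0.
  apply: (kern _ _ p1 p2).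
  - apply: alf_inj; rewrite pB aB !Psi (zm0 (EDh_f_hom (al X2))).
    by apply/eqP.
  - by case=> u v /= -> ->.
  - rewrite gB gid; last by edeq.
    rewrite gid; last by edeq.
    rewrite gz; try by z2.
    by rewrite subrr subr0.
  - rewrite gB gid; last by edeq.
    rewrite gz; try by z2.
    rewrite gid; last by edeq.
    by rewrite subr0 subrr.
have H2 : x1 - x3 - x2 = 0.
  apply: (kern _ _ p1 p3).
  - apply: alf_inj; rewrite pB aB !Psi (zm0 (EDh_f_hom (al X2))).
    by apply/eqP.
  - case=> u v /= Hu; rewrite /fp3 /= Hu add0r => ->. by [].
  - rewrite gB gid; last by edeq.
    rewrite gid; last by edeq.
    rewrite gz; try by z2.
    by rewrite subrr subr0.
  - rewrite gB gid; last by edeq.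
    rewrite gz; try by z2.
    rewrite gid; last by edeq.
    by rewrite subr0 subrr.
have E1 : x3 = x1 + x2 by apply/eqP; rewrite -subr_eq0 opprD addrA H1.
have E2 : x1 = x3 + x2 by apply/eqP; rewrite -subr_eq0 opprD addrA H2.
have D : x2 *+ 2 = 0.
  apply: (@addrI _ x1); rewrite addr0 mulr2n addrA -E1 -E2 //.
have := EE_chietapsi x2; rewrite D => /EE_exact_C2 [c' Hc'].
have := EDh_comm (al X2) (EE_psi x2); rewrite /= Hc'.
rewrite (zm2 (EDh_h_hom (al X2))) V_2 Psi.
by move/eqP.
Qed.
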